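(* For all $a,b>0$, $$H(a,b)\le\lambda_{-1}(a,b)\le G(a,b)\le\lambda_0(a,b)\le L(a,b)\le\lambda_1(a,b)\le I(a,b).$$
   Context: For $a,b>0$ with $a\neq b$ define $$\lambda_{-1}(a,b)=\dfrac{2\log\frac{a+b}{2}-\log a-\log b}{\frac{1}{2a}+\frac{1}{2b}-\frac{2}{a+b}},\quad \lambda_0(a,b)=\dfrac{a\log a+b\log b-(a+b)\log\frac{a+b}{2}}{2\log\frac{a+b}{2}-\log a-\log b},$$ $$\lambda_1(a,b)=\dfrac{(b-a)^2}{4\left(a\log a+b\log b-(a+b)\log\frac{a+b}{2}\right)},$$ and $\lambda_s(a,a)=a$. Here $H(a,b)=2(1/a+1/b)^{-1}$, $G(a,b)=\sqrt{ab}$, $L(a,b)=\frac{b-a}{\log b-\log a}$, $I(a,b)=\frac1e(b^b/a^a)^{1/(b-a)}$ for $a\neq b$, with $L(a,a)=I(a,a)=a$. *)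

(* Defs.v *)
From Stdlib Require Import Reals.
Open Scope R_scope.

Definition Hm (a b : R) : R := 2 / (/ a + / b).
Definition Gm (a b : R) : R := sqrt (a * b).
Definition Lm (a b : R) : R :=
  if Req_EM_T a b then a else (b - a) / (ln b - ln a).
Definition Im (a b : R) : R :=
  if Req_EM_T a b then a
  else / exp 1 * Rpower (Rpower b b / Rpower a a) (/ (b - a)).

Definition lam_m1 (a b : R) : R :=
  if Req_EM_T a b then a else
  (2 * ln ((a + b) / 2) - ln a - ln b) /
  (/ (2 * a) + / (2 * b) - 2 / (a + b)).

Definition lam_0 (a b : R) : R :=
  if Req_EM_T a b then a else
  (a * ln a + b * ln b - (a + b) * ln ((a + b) / 2)) /
  (2 * ln ((a + b) / 2) - ln a - ln b).

Definition lam_1 (a b : R) : R :=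
  if Req_EM_T a b then a else
  (b - a) ^ 2 / (4 * (a * ln a + b * ln b - (a + b) * ln ((a + b) / 2))).

(* Main.v *)
Require Import Defs.
From Stdlib Require Import Reals Lra Psatz.
Open Scope R_scope.
From Coquelicot Require Import Coquelicot.
Require Import Defs.
Ltac sside := repeat split; try (intro); nra.
Ltac fld := unfold Rminus; field; sside.

Lemma mono_ab (f f' : R -> R) (a b : R) : a < b ->
  (forall x, a <= x <= b -> is_derive f x (f' x)) ->
  (forall x, a < x < b -> 0 <= f' x) -> f a <= f b.
Proof.
intros hab hd hp.
destruct (MVT_cor2 f f' a b hab) as [c [hc1 hc2]].
{ intros c hc. apply is_derive_Reals. now apply hd. }
assert (0 <= f' c * (b - a)) by (apply Rmult_le_pos; [apply hp; lra| lra]).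
lra.
Qed.

Lemma mono0 (f f' : R -> R) (T : R) : 0 < T ->
  (forall x, 0 <= x <= T -> is_derive f x (f' x)) ->
  (forall x, 0 < x < T -> 0 <= f' x) -> f 0 = 0 -> 0 <= f T.
Proof. intros hT hd hp h0. rewrite <- h0. now apply mono_ab with f'. Qed.

Lemma ln_le_x1 x : 0 < x -> ln x <= x - 1.
Proof.
intros hx. destruct (Req_dec (ln x) 0) as [e|n].
- rewrite e. assert (x = 1). { apply ln_inv; auto. lra. rewrite ln_1; auto. } lra.
- pose proof (exp_ineq1 _ n). rewrite exp_ln in H; lra.
Qed.

Lemma pl0 : ln (1 + 0) = 0. Proof. replace (1+0) with 1 by ring. apply ln_1. Qed.
Lemma ql0 : ln (1 - 0) = 0. Proof. replace (1-0) with 1 by ring. apply ln_1. Qed.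

Definition Lf t := ln (1+t) - ln (1-t).
Definition Sf t := - (ln (1+t) + ln (1-t)).
Definition Ef t := t * Lf t - Sf t.

Lemma L1 t : 0 <= t < 1 -> 2 * t <= Lf t.
Proof.
intros ht. destruct (Req_dec t 0) as [->|nz]. { unfold Lf. rewrite pl0, ql0. lra. }
assert (0 <= Lf t - 2 * t); [|lra].
apply (mono0 (fun x => Lf x - 2 * x) (fun x => 2/(1-x^2) - 2)); try lra.
- intros x hx. unfold Lf. auto_derive; [sside| fld].
- intros x hx. assert (0 < 1 - x^2 <= 1) by nra.
  assert (1 <= 2 / (1 - x^2) / 2). { unfold Rdiv. rewrite Rmult_assoc. apply Rmult_le_reg_r with (1-x^2); try lra. field_simplify; nra. }
  lra.
- unfold Lf. rewrite pl0, ql0. ring.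
Qed.

Lemma div_nn a b : 0 <= a -> 0 < b -> 0 <= a / b.
Proof. intros. unfold Rdiv. apply Rmult_le_pos; auto. left. now apply Rinv_0_lt_compat. Qed.

Lemma L2 t : 0 <= t < 1 -> t^2 <= Sf t.
Proof.
intros ht. destruct (Req_dec t 0) as [->|nz]. { unfold Sf. rewrite pl0, ql0. lra. }
assert (0 <= Sf t - t^2); [|lra].
apply (mono0 (fun x => Sf x - x^2) (fun x => 2*x^3/(1-x^2))); try lra.
- intros x hx. unfold Sf. auto_derive; [sside| fld].
- intros x hx. apply div_nn; nra.
- unfold Sf. rewrite pl0, ql0. ring.
Qed.

Lemma L3 t : 0 <= t < 1 -> t^2 <= Ef t.
Proof.
intros ht. destruct (Req_dec t 0) as [->|nz]. { unfold Ef, Sf, Lf. rewrite pl0, ql0. lra. }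
assert (0 <= Ef t - t^2); [|lra].
apply (mono0 (fun x => Ef x - x^2) (fun x => Lf x - 2 * x)); try lra.
- intros x hx. unfold Ef, Sf, Lf. auto_derive; [sside| fld].
- intros x hx. pose proof (L1 x). lra.
- unfold Ef, Sf, Lf. rewrite pl0, ql0. ring.
Qed.

Lemma L5a t : 0 <= t < 1 -> Lf t <= 2 * t / (1 - t^2).
Proof.
intros ht. destruct (Req_dec t 0) as [->|nz]. { unfold Lf. rewrite pl0, ql0. lra. }
assert (0 <= 2 * t / (1 - t^2) - Lf t); [|lra].
apply (mono0 (fun x => 2 * x / (1 - x^2) - Lf x) (fun x => 4*x^2/(1-x^2)^2)); try lra.
- intros x hx. unfold Lf. auto_derive; [sside| fld].
- intros x hx. assert (0 < 1 - x^2) by nra. apply div_nn; [nra| apply pow_lt; lra].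
- unfold Lf. rewrite pl0, ql0. field.
Qed.

Lemma L5 t : 0 <= t < 1 -> t * Lf t <= 2 * Sf t.
Proof.
intros ht. destruct (Req_dec t 0) as [->|nz]. { unfold Sf, Lf. rewrite pl0, ql0. lra. }
assert (0 <= 2 * Sf t - t * Lf t); [|lra].
apply (mono0 (fun x => 2 * Sf x - x * Lf x) (fun x => 2 * x / (1 - x^2) - Lf x)); try lra.
- intros x hx. unfold Sf, Lf. auto_derive; [sside| fld].
- intros x hx. pose proof (L5a x). lra.
- unfold Sf, Lf. rewrite pl0, ql0. ring.
Qed.

Definition Chi1 x := 6 - 3*(2/(1-x^2)) - 2*Sf x - 4*x^2/(1-x^2) + Lf x ^ 2 + 2*x*Lf x*(2/(1-x^2)).
Definition Chi x := 6*x - 3 * Lf x - 2 * x * Sf x + x * Lf x ^ 2.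
Definition Psi x := 2*x^2 - x * Lf x + Sf x * (2-x^2) - (1-x^2) * Lf x ^ 2 / 2.
Definition Phi x := Sf x * (Lf x + 2*x) - x * Lf x ^ 2.

Ltac at0 := unfold Chi1, Chi, Psi, Phi, Sf, Lf; rewrite ?pl0, ?ql0; field.
Ltac dv := unfold Chi1, Chi, Psi, Phi, Sf, Lf; auto_derive; [sside| fld].

Lemma Chi1_pos t : 0 <= t < 1 -> 0 <= Chi1 t.
Proof.
intros ht. destruct (Req_dec t 0) as [->|nz]. { right. symmetry. at0. }
apply (mono0 Chi1 (fun x => 4*(2*Lf x - 4*x + x^3)/(1-x^2)^2)); try lra.
- intros x hx. dv.
- intros x hx. assert (0 < 1 - x^2) by nra. pose proof (L1 x).
  apply div_nn; [nra| apply pow_lt; lra].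
- at0.
Qed.

Lemma Chi_pos t : 0 <= t < 1 -> 0 <= Chi t.
Proof.
intros ht. destruct (Req_dec t 0) as [->|nz]. { right. symmetry. at0. }
apply (mono0 Chi Chi1); try lra.
- intros x hx. dv.
- intros x hx. apply Chi1_pos; lra.
- at0.
Qed.

Lemma Psi_pos t : 0 <= t < 1 -> 0 <= Psi t.
Proof.
intros ht. destruct (Req_dec t 0) as [->|nz]. { right. symmetry. at0. }
apply (mono0 Psi Chi); try lra.
- intros x hx. dv.
- intros x hx. apply Chi_pos; lra.
- at0.
Qed.

Lemma Phi_pos t : 0 <= t < 1 -> 0 <= Phi t.
Proof.
intros ht. destruct (Req_dec t 0) as [->|nz]. { right. symmetry. at0. }
apply (mono0 Phi (fun x => 2 * Psi x / (1 - x^2))); try lra.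
- intros x hx. dv.
- intros x hx. apply div_nn; [|nra]. pose proof (Psi_pos x). lra.
- at0.
Qed.

Lemma C2 r : 0 < r < 1 -> r * (- (2 * ln r)) <= 1 - r^2.
Proof.
intros hr.
assert (r^2 - 1 - 2 * r * ln r <= 1^2 - 1 - 2 * 1 * ln 1); [|rewrite ln_1 in H; nra].
apply (mono_ab (fun x => x^2 - 1 - 2 * x * ln x) (fun x => 2*x - 2 * ln x - 2)); try lra.
- intros x hx. auto_derive; [lra| field; lra].
- intros x hx. pose proof (ln_le_x1 x). lra.
Qed.

Lemma C3 x : 0 <= x < 1 -> ln (1 + x^2) - ln (1+x) - ln (1-x) <= x * Lf x.
Proof.
intros ht. destruct (Req_dec x 0) as [->|nz].
{ unfold Lf. rewrite pl0, ql0. replace (1+0^2) with 1 by ring. rewrite ln_1. lra. }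
assert (0 <= x * Lf x - ln (1 + x^2) + ln (1+x) + ln (1-x)); [|lra].
apply (mono0 (fun x => x * Lf x - ln (1 + x^2) + ln (1+x) + ln (1-x)) (fun x => Lf x - 2*x/(1+x^2))); try lra.
- intros y hy. unfold Lf. auto_derive; [sside| fld].
- intros y hy. pose proof (L1 y). assert (2*y/(1+y^2) <= 2*y); [|lra].
  apply Rmult_le_reg_r with (1+y^2). nra. field_simplify; nra.
- unfold Lf. rewrite pl0, ql0. replace (1+0^2) with 1 by ring. rewrite ln_1. ring.
Qed.

Lemma ln_le x y : 0 < x -> x <= y -> ln x <= ln y.
Proof. intros hx [h|h]. left; now apply ln_increasing. subst; lra. Qed.

Definition Om x := Lf x / (2*x) - Sf x / 2 - 1 - 2 * ln x + ln (Ef x).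

Lemma Ef_pos x : 0 < x < 1 -> 0 < Ef x.
Proof. intros h. pose proof (L3 x). nra. Qed.

Lemma Om_low e : 0 < e < 1 -> - (e^2/(2*(1-e^2))) <= Om e.
Proof.
intros he. unfold Om.
pose proof (L1 e ltac:(lra)). pose proof (L3 e ltac:(lra)).
assert (h1 : 1 <= Lf e / (2*e)). { apply Rmult_le_reg_r with (2*e). lra. field_simplify; lra. }
assert (h2 : Sf e <= e^2/(1-e^2)).
{ unfold Sf. rewrite <- ln_mult by lra. replace ((1+e)*(1-e)) with (/ (1/(1-e^2))) by (field; nra).
  rewrite ln_Rinv. rewrite Ropp_involutive.
  replace (e^2/(1-e^2)) with (1/(1-e^2) - 1) by (field; nra). apply ln_le_x1.
  all: apply Rdiv_lt_0_compat; nra. }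
assert (h3 : 2 * ln e <= ln (Ef e)).
{ replace (2 * ln e) with (ln (e^2)). apply ln_le; nra. simpl. rewrite Rmult_1_r, ln_mult; lra. }
assert (e^2/(2*(1-e^2)) = (e^2/(1-e^2))/2) by (field; nra). lra.
Qed.

Lemma Om_der x : 0 < x < 1 -> is_derive Om x (Phi x / (2 * x^2 * Ef x)).
Proof.
intros hx. pose proof (Ef_pos x hx) as hE.
unfold Om, Phi, Ef, Sf, Lf in *. unfold Rminus in *.
auto_derive; [repeat split; try intro; nra | field; repeat split; try intro; nra].
Qed.

Lemma Om_pos t : 0 < t < 1 -> 0 <= Om t.
Proof.
intros ht.
assert (key : forall e, 0 < e < t -> - (e^2/(2*(1-e^2))) <= Om t).
{ intros e he. eapply Rle_trans. apply Om_low; lra.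
  apply (mono_ab Om (fun x => Phi x / (2 * x^2 * Ef x))); try lra.
  - intros x hx. apply Om_der; lra.
  - intros x hx. apply div_nn. apply Phi_pos; lra. pose proof (Ef_pos x ltac:(lra)).
    assert (0 < x^2) by nra. apply Rmult_lt_0_compat; lra. }
destruct (Rle_or_lt 0 (Om t)) as [h|h]; auto.
set (d := - Om t).
set (e := Rmin (t/2) (Rmin (1/2) d)).
assert (he1 : e <= t/2) by apply Rmin_l.
assert (he2 : e <= 1/2) by (eapply Rle_trans; [apply Rmin_r| apply Rmin_l]).
assert (he3 : e <= d) by (eapply Rle_trans; [apply Rmin_r| apply Rmin_r]).
assert (he0 : 0 < e). { unfold e. repeat apply Rmin_glb_lt; unfold d; lra. }
specialize (key e ltac:(lra)).
assert (e^2/(2*(1-e^2)) <= e^2).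
{ assert (/(2*(1-e^2)) <= 1). { rewrite <- Rinv_1. apply Rinv_le_contravar; nra. }
  unfold Rdiv. assert (0 <= e^2) by nra. nra. }
unfold d in *. nra.
Qed.
Ltac fs := repeat split; try (intro; nra).

Definition Goal6 a b := Hm a b <= lam_m1 a b /\ lam_m1 a b <= Gm a b /\ Gm a b <= lam_0 a b /\
  lam_0 a b <= Lm a b /\ Lm a b <= lam_1 a b /\ lam_1 a b <= Im a b.

Lemma Im_eq a b : 0 < a -> 0 < b -> a <> b -> Im a b = exp ((b*ln b - a*ln a)/(b-a) - 1).
Proof.
intros ha hb nab. unfold Im. destruct (Req_EM_T a b); [contradiction|].
unfold Rpower.
assert (e : exp (b * ln b) / exp (a * ln a) = exp (b * ln b - a * ln a)).
{ unfold Rdiv, Rminus. rewrite exp_plus, exp_Ropp. reflexivity. }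
rewrite e, ln_exp. replace (/ exp 1) with (exp (-1)) by apply exp_Ropp.
rewrite <- exp_plus. f_equal. field; fs.
Qed.

Lemma le_of_diff x y d : y - x = d -> 0 <= d -> x <= y.
Proof. intros; lra. Qed.

Lemma case_core A u : 0 < A -> 0 < u < 1 ->
  Goal6 (A * (1 - 2*u/(1+u^2))) (A * (1 + 2*u/(1+u^2))).
Proof.
intros hA hu.
set (t := 2*u/(1+u^2)).
set (r := (1-u^2)/(1+u^2)).
assert (hu2 : 0 < 1 + u^2) by nra.
assert (ht : 0 < t < 1). { unfold t; split. apply Rdiv_lt_0_compat; lra.
  apply Rmult_lt_reg_r with (1+u^2); auto. field_simplify; nra. }
assert (hr : 0 < r < 1). { unfold r; split. apply Rdiv_lt_0_compat; nra.
  apply Rmult_lt_reg_r with (1+u^2); auto. field_simplify; nra. }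
set (a := A * (1 - t)). set (b := A * (1 + t)).
assert (ha : 0 < a) by (unfold a; nra). assert (hb : 0 < b) by (unfold b; nra).
assert (nab : a <> b) by (unfold a, b; nra).
set (p := ln (1 + t)). set (q := ln (1 - t)).
assert (hla : ln a = ln A + q) by (unfold a, q; apply ln_mult; lra).
assert (hlb : ln b = ln A + p) by (unfold b, p; apply ln_mult; lra).
assert (hab : (a + b) / 2 = A) by (unfold a, b; field).
set (s := Sf t). set (l := Lf t). set (E := Ef t).
assert (hs : s = - (p + q)) by reflexivity.
assert (hl : l = p - q) by reflexivity.
assert (hE : E = t * l - s) by reflexivity.
assert (Ht2 : 0 < t^2) by nra.
assert (H1 : t^2 <= s) by (apply L2; lra).
assert (H2 : 2 * t <= l) by (apply L1; lra).
assert (H3 : t^2 <= E) by (apply L3; lra).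
assert (H5 : t * l <= 2 * s) by (apply L5; lra).
assert (H4 : 0 <= s * (l + 2*t) - t * l^2) by (apply Phi_pos; lra).
assert (H6 : 0 <= Om t) by (apply Om_pos; lra).
assert (HC2 : r * s <= t^2).
{ assert (e1 : p + q = 2 * ln r).
  { unfold p, q. rewrite <- ln_mult by lra. replace (2 * ln r) with (ln r + ln r) by ring.
    rewrite <- ln_mult by lra. f_equal. unfold r, t. field; fs. }
  pose proof (C2 r hr). assert (r^2 = 1 - t^2) by (unfold r, t; field; fs).
  rewrite hs, e1. lra. }
assert (HC3 : r * s <= t * l - s).
{ pose proof (C3 u ltac:(lra)) as c3. unfold Lf in c3.
  assert (ep : p = 2 * ln (1+u) - ln (1+u^2)).
  { unfold p. replace (1 + t) with ((1+u)*(1+u) * / (1+u^2)) by (unfold t; field; fs).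
    rewrite ln_mult, ln_mult, ln_Rinv; try nra; try (apply Rmult_lt_0_compat; lra); try (apply Rinv_0_lt_compat; lra). }
  assert (eq' : q = 2 * ln (1-u) - ln (1+u^2)).
  { unfold q. replace (1 - t) with ((1-u)*(1-u) * / (1+u^2)) by (unfold t; field; fs).
    rewrite ln_mult, ln_mult, ln_Rinv; try nra; try (apply Rmult_lt_0_compat; lra); try (apply Rinv_0_lt_compat; lra). }
  assert (e1 : t * l - s - r * s = (2/(1+u^2)) * (2 * (u * (ln (1+u) - ln (1-u)) - (ln (1+u^2) - ln (1+u) - ln (1-u))))).
  { rewrite hs, hl, ep, eq'. unfold t, r. field; fs. }
  assert (0 <= (2/(1+u^2)) * (2 * (u * (ln (1+u) - ln (1-u)) - (ln (1+u^2) - ln (1+u) - ln (1-u))))).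
  { apply Rmult_le_pos. apply div_nn; lra. lra. }
  lra. }
assert (eG : Gm a b = A * r).
{ unfold Gm. replace (a*b) with ((A*r)*(A*r)) by (unfold a,b,r,t; field; fs).
  apply sqrt_square. nra. }
assert (eH : Hm a b = A * r^2).
{ unfold Hm, a, b, r, t. field; repeat split; try nra. }
assert (em1 : lam_m1 a b = A * r^2 * s / t^2).
{ unfold lam_m1. destruct (Req_EM_T a b) as [e|_]; [contradiction|].
  rewrite hab, hla, hlb, hs. unfold a, b, r, t. field; repeat split; try (intro HH; nra).
  match goal with |- ?X <> 0 => replace X with (16*A*(1+u^2)*u^2) by ring end.
  assert (0 < u^2) by nra. assert (0 < 16*A*(1+u^2)*u^2) by (repeat apply Rmult_lt_0_compat; lra). lra. }
assert (e0 : lam_0 a b = A * E / s).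
{ unfold lam_0. destruct (Req_EM_T a b) as [e|_]; [contradiction|].
  rewrite hab, hla, hlb, hE, hl, hs. unfold a, b. field; fs. }
assert (eL : Lm a b = 2 * A * t / l).
{ unfold Lm. destruct (Req_EM_T a b) as [e|_]; [contradiction|].
  rewrite hla, hlb, hl. unfold a, b. field; fs. }
assert (e1 : lam_1 a b = A * t^2 / E).
{ unfold lam_1. destruct (Req_EM_T a b) as [e|_]; [contradiction|].
  rewrite hab, hla, hlb, hE, hl, hs. unfold a, b. field; fs. }
assert (eI : Im a b = A * exp ((l - t * s)/(2*t) - 1)).
{ rewrite Im_eq by auto. rewrite hla, hlb.
  replace ((b * (ln A + p) - a * (ln A + q)) / (b - a) - 1) with (ln A + ((l - t * s)/(2*t) - 1)).
  rewrite exp_plus, exp_ln; auto.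
  rewrite hl, hs. unfold a, b. field; fs. }
assert (Hl0 : 0 < l) by lra. assert (Hs0 : 0 < s) by lra. assert (HE0 : 0 < E) by lra.
unfold Goal6. rewrite eG, eH, em1, e0, eL, e1, eI.
repeat split.
- apply (le_of_diff _ _ (A * r^2 * (s - t^2) / t^2)). field; fs.
  apply div_nn; [|lra]. apply Rmult_le_pos; nra.
- apply (le_of_diff _ _ (A * r * (t^2 - r * s) / t^2)).
  assert (r^2 = 1 - t^2) by (unfold r, t; field; fs). field; fs.
  apply div_nn; [|lra]. apply Rmult_le_pos; nra.
- apply (le_of_diff _ _ (A * (E - r * s) / s)). field; fs.
  apply div_nn; [|lra]. apply Rmult_le_pos; nra.
- apply (le_of_diff _ _ (A * (s * (l + 2*t) - t * l^2) / (l * s))). rewrite hE. field; fs.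
  apply div_nn; [|nra]. apply Rmult_le_pos; nra.
- apply (le_of_diff _ _ (A * t * (2 * s - t * l) / (E * l))). rewrite hE. field; fs.
  apply div_nn; [|nra]. apply Rmult_le_pos; nra.
- replace (A * t^2 / E) with (A * (t^2 / E)) by (field; fs).
  apply Rmult_le_compat_l; [lra|].
  replace (t^2 / E) with (exp (ln (t^2/E))) by (apply exp_ln; apply Rdiv_lt_0_compat; lra).
  assert (ln (t^2/E) <= (l - t*s)/(2*t) - 1).
  { unfold Rdiv at 1. rewrite ln_mult, ln_Rinv by (try apply Rinv_0_lt_compat; lra).
    replace (ln (t^2)) with (2 * ln t) by (simpl; rewrite Rmult_1_r, ln_mult; lra).
    unfold Om in H6. fold s l E in H6.
    replace ((l - t*s)/(2*t)) with (l/(2*t) - s/2) by (field; fs). lra. }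
  destruct H as [h|h]. left; now apply exp_increasing. rewrite h; lra.
Qed.

Lemma case_lt a b : 0 < a -> a < b -> Goal6 a b.
Proof.
intros ha hab.
set (x := sqrt a). set (y := sqrt b).
assert (hx : 0 < x) by (apply sqrt_lt_R0; lra).
assert (hy : 0 < y) by (apply sqrt_lt_R0; lra).
assert (ex : x * x = a) by (apply sqrt_sqrt; lra).
assert (ey : y * y = b) by (apply sqrt_sqrt; lra).
assert (hxy : x < y). { destruct (Rlt_or_le x y); auto. nra. }
set (u := (y - x)/(y + x)).
assert (hu : 0 < u < 1). { unfold u; split. apply Rdiv_lt_0_compat; lra.
  apply Rmult_lt_reg_r with (y+x). lra. field_simplify; lra. }
assert (H := case_core ((a+b)/2) u ltac:(lra) hu).
assert (ea : (a+b)/2 * (1 - 2*u/(1+u^2)) = a).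
{ rewrite <- ex, <- ey. unfold u. field. fs. }
assert (eb : (a+b)/2 * (1 + 2*u/(1+u^2)) = b).
{ rewrite <- ex, <- ey. unfold u. field. fs. }
rewrite ea, eb in H. exact H.
Qed.

Lemma Goal6_sym a b : 0 < a -> 0 < b -> a <> b -> Goal6 b a -> Goal6 a b.
Proof.
intros ha hb nab H.
assert (nba : b <> a) by auto.
assert (hln : ln a <> ln b). { intro e. apply nab. apply ln_inv; auto. }
assert (sH : Hm a b = Hm b a) by (unfold Hm; f_equal; ring).
assert (sG : Gm a b = Gm b a) by (unfold Gm; f_equal; ring).
assert (sL : Lm a b = Lm b a).
{ unfold Lm. destruct (Req_EM_T a b); [contradiction|]. destruct (Req_EM_T b a); [congruence|].
  field. split; intro; apply hln; lra. }
assert (sI : Im a b = Im b a).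
{ rewrite !Im_eq by auto. f_equal. field. fs. }
assert (s1 : lam_m1 a b = lam_m1 b a).
{ unfold lam_m1. destruct (Req_EM_T a b); [contradiction|]. destruct (Req_EM_T b a); [congruence|].
  rewrite (Rplus_comm b a). f_equal; ring. }
assert (s0 : lam_0 a b = lam_0 b a).
{ unfold lam_0. destruct (Req_EM_T a b); [contradiction|]. destruct (Req_EM_T b a); [congruence|].
  rewrite (Rplus_comm b a). f_equal; ring. }
assert (s2 : lam_1 a b = lam_1 b a).
{ unfold lam_1. destruct (Req_EM_T a b); [contradiction|]. destruct (Req_EM_T b a); [congruence|].
  rewrite (Rplus_comm b a). f_equal; ring. }
unfold Goal6 in *. rewrite sH, sG, sL, sI, s1, s0, s2. exact H.
Qed.

Theorem mainTheorem15 (a b : R) (ha : 0 < a) (hb : 0 < b) :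
  Hm a b <= lam_m1 a b /\ lam_m1 a b <= Gm a b /\ Gm a b <= lam_0 a b /\
  lam_0 a b <= Lm a b /\ Lm a b <= lam_1 a b /\ lam_1 a b <= Im a b.
Proof.
fold (Goal6 a b).
destruct (Rtotal_order a b) as [h|[h|h]].
- now apply case_lt.
- subst b. unfold Goal6, Hm, Gm, Lm, Im, lam_m1, lam_0, lam_1.
  destruct (Req_EM_T a a); [|congruence].
  rewrite sqrt_square by lra. replace (2 / (/ a + / a)) with a by (field; lra). lra.
- apply Goal6_sym; auto. lra. now apply case_lt.
Qed.
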